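(* Let $H$ be an undirected graph (possibly with loops), let $T$ be a tree with at least $2$ vertices and an arbitrarily chosen root $r$, and let $\alpha,\beta$ be two $H$-colorings of $T$. Then $\alpha$ can be reconfigured to $\beta$ if and only if there is a walk of even length in $H$ between $\alpha(r)$ and $\beta(r)$.
   Context: Undirected graphs are treated as digraphs with arcs in both directions for every edge. An $H$-coloring of $T$ is a map $c:V(T)\to V(H)$ such that for every edge $uv$ of $T$, $c(u)c(v)$ is an edge of $H$ (possibly a loop if $c(u)=c(v)$). $\alpha$ can be reconfigured to $\beta$ if there is a sequence of $H$-colorings of $T$ from $\alpha$ to $\beta$ in which consecutive colorings differ on exactly one vertex. A walk of length $0$ (when $\alpha(r)=\beta(r)$) counts as even. *)

(* Defs.v *)
From mathcomp Require Import all_boot.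
Set Implicit Arguments. Unset Strict Implicit. Unset Printing Implicit Defensive.

Definition simple_graph (T : finType) (e : rel T) : Prop :=
  symmetric e /\ irreflexive e.

(* A tree: a connected simple graph with no cycle.  A cycle is a closed walk
   x = x_0, x_1, ..., x_k, x_0 with k+1 >= 3 pairwise distinct vertices. *)
Definition acyclic (T : finType) (e : rel T) : Prop :=
  forall (x : T) (p : seq T),
    uniq (x :: p) -> path e x p -> 2 <= size p -> ~~ e (last x p) x.

Definition is_tree (T : finType) (e : rel T) : Prop :=
  simple_graph e /\ (forall x y, connect e x y) /\ acyclic e.

Definition undirected (H : finType) (eH : rel H) : Prop := symmetric eH.

Definition is_Hcoloring (T H : finType) (eT : rel T) (eH : rel H)
  (c : {ffun T -> H}) : bool :=
  [forall u, forall v, eT u v ==> eH (c u) (c v)].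

Definition differ_one (T H : finType) (c c' : {ffun T -> H}) : bool :=
  #|[set v | c v != c' v]| == 1.

Definition reconfigurable (T H : finType) (eT : rel T) (eH : rel H)
  (alpha beta : {ffun T -> H}) : Prop :=
  exists s : seq {ffun T -> H},
    [/\ all (is_Hcoloring eT eH) (alpha :: s),
        path (@differ_one T H) alpha s & last alpha s = beta].

(* a walk of even length in H from a to b (length = number of steps;
   length 0 allowed when a = b) *)
Definition even_walk (H : finType) (eH : rel H) (a b : H) : Prop :=
  exists p : seq H, [/\ path eH a p, last a p = b & ~~ odd (size p)].

(* Main.v *)
Require Import Defs.
From mathcomp Require Import all_boot.
From mathcomp Require Import zify.
Set Implicit Arguments. Unset Strict Implicit. Unset Printing Implicit Defensive.

Section Main.
Variables (T : finType) (e : rel T) (r : T).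
Hypothesis eS : symmetric e.
Hypothesis eI : irreflexive e.
Hypothesis eC : forall x y, connect e x y.
Hypothesis eA : acyclic e.

Definition Pd (v : T) (n : nat) : bool :=
  [exists t : n.-tuple T, path e r t && (last r t == v)].

Lemma Pd_ex v : exists n, Pd v n.
Proof.
have /connectP [p pp ->] := eC r v.
exists (size p); apply/existsP; exists (in_tuple p) => /=; by rewrite pp eqxx.
Qed.

Definition D v := ex_minn (Pd_ex v).

Lemma D_min v p : path e r p -> last r p = v -> D v <= size p.
Proof.
move=> pp lp; rewrite /D; case: ex_minnP => m _; apply.
apply/existsP; exists (in_tuple p) => /=; by rewrite pp lp eqxx.
Qed.

Lemma D_ex v : exists2 p, path e r p & (last r p = v /\ size p = D v).
Proof.
rewrite /D; case: ex_minnP => m /existsP [t /andP [pt /eqP lt]] _.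
by exists t; rewrite ?size_tuple.
Qed.

Lemma D_r : D r = 0.
Proof. apply/eqP; rewrite -leqn0; exact: (@D_min r [::]). Qed.

Lemma D0 v : D v = 0 -> v = r.
Proof. move=> Dv; case: (D_ex v) => p _ [lp]; rewrite Dv; by case: p lp. Qed.

Lemma D_edge u v : e u v -> D v <= (D u).+1.
Proof.
move=> euv; case: (D_ex u) => p pp [lp sp].
have := @D_min v (rcons p v); rewrite rcons_path pp lp euv last_rcons size_rcons sp.
by apply.
Qed.

Lemma D_par_ex v : v != r -> exists2 w, e v w & (D w).+1 = D v.
Proof.
move=> vr; case: (D_ex v) => p pp [lp sp].
move: pp lp sp; case/lastP: p => [|q z] pp lp sp.
  by move: vr; rewrite -lp eqxx.
rewrite last_rcons in lp; subst z; move: pp; rewrite rcons_path => /andP [pq ew].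
exists (last r q); first by rewrite eS.
apply/eqP; rewrite eqn_leq D_edge //=.
have := @D_min (last r q) q pq erefl; rewrite -sp size_rcons.
by rewrite andbT ltnS.
Qed.

Definition par v := odflt v [pick w | e v w && ((D w).+1 == D v)].

Lemma par_spec v : v != r -> e v (par v) /\ (D (par v)).+1 = D v.
Proof.
move=> vr; rewrite /par; case: pickP => [w /andP [ew /eqP dw] | none] //=.
case: (D_par_ex vr) => w ew dw; move: (none w); by rewrite ew dw eqxx.
Qed.

Lemma Dpos v : v != r -> 0 < D v.
Proof. move=> vr; rewrite lt0n; by apply: contra vr => /eqP/D0 ->. Qed.

Lemma notin_D n x s : all (fun w => D w < n) s -> n <= D x -> x \notin s.
Proof. move=> /allP al nx; apply/negP => /al; by rewrite ltnNge nx. Qed.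

Lemma neqD x y : D x != D y -> x != y.
Proof. by apply: contra => /eqP ->. Qed.

Lemma chainC k : forall u u', D u = k -> D u' = k -> u != u' ->
  exists q, [/\ path e u (rcons q u'), uniq (u :: rcons q u'), 0 < size q
              & all (fun w => D w < k) q].
Proof.
elim: k => [|k IH] u u' Du Du' uu'.
  by move: uu'; rewrite (D0 Du) (D0 Du') eqxx.
have ur : u != r by apply/eqP => ur; move: Du; rewrite ur D_r.
have u'r : u' != r by apply/eqP => E; move: Du'; rewrite E D_r.
case: (par_spec ur) => eu Dpu; case: (par_spec u'r) => eu' Dpu'.
rewrite Du in Dpu; rewrite Du' in Dpu'; move: Dpu Dpu' => [Dpu] [Dpu'].
case: (eqVneq (par u) (par u')) => [E|N].
  exists [:: par u]; split => //=.
  - by rewrite eu /= E eS eu'.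
  - rewrite !inE negb_or uu' andbT !neqD //; by rewrite ?Du ?Du' Dpu ?eqxx // ?neq_ltn ltnSn ?orbT.
  - by rewrite Dpu ltnSn.
case: (IH _ _ Dpu Dpu' N) => q [pq uq sq aq].
have aX : all (fun w => D w < k.+1) (par u :: rcons q (par u')).
  rewrite /= all_rcons Dpu Dpu' ltnSn /=.
  by apply: sub_all aq => w /= /ltnW.
exists (par u :: rcons q (par u')); split => //.
- by rewrite rcons_cons /= eu rcons_path pq last_rcons eS eu'.
- rewrite cons_uniq rcons_uniq mem_rcons in_cons negb_or uu' uq.
  by rewrite (@notin_D k.+1 u _ aX) ?Du // (@notin_D k.+1 u' _ aX) ?Du'.
Qed.

Lemma edge_neqD u v : e u v -> D u != D v.
Proof.
move=> euv; apply/eqP => Duv.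
have uv : u != v by apply/eqP => E; move: euv; rewrite E eI.
case: (chainC (erefl (D u)) (esym Duv) uv) => q [pq uq sq _].
have := eA uq pq; rewrite size_rcons ltnS sq last_rcons => /(_ isT).
by rewrite eS euv.
Qed.

Lemma par_uniq v u u' : e v u -> e v u' -> (D u).+1 = D v -> (D u').+1 = D v -> u = u'.
Proof.
move=> evu evu' Du Du'; case: (eqVneq u u') => // uu'; exfalso.
have Duu : D u' = D u by move: Du'; rewrite -Du => -[].
case: (chainC (erefl (D u)) Duu uu') => q [pq uq sq aq].
have aX : all (fun w => D w < D v) (u :: rcons q u').
  rewrite /= all_rcons -Du ltnSn Duu ltnSn /=.
  by apply: sub_all aq => w /= h; rewrite ltnS ltnW.
have := @eA v (u :: rcons q u').
rewrite cons_uniq (@notin_D (D v) v _ aX) // uq /= evu pq size_rcons last_rcons => /(_ isT isT isT).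
by rewrite eS evu'.
Qed.

Lemma edge_par u v : e u v ->
  (par v = u /\ (D u).+1 = D v) \/ (par u = v /\ (D v).+1 = D u).
Proof.
move=> euv; have h1 := D_edge euv.
have evu : e v u by rewrite eS.
have h2 := D_edge evu; have h3 := edge_neqD euv.
case: (ltngtP (D u) (D v)) => [lt|gt|eq]; last by rewrite eq eqxx in h3.
- left; have Dv : (D u).+1 = D v by apply/eqP; rewrite eqn_leq lt h1.
  have vr : v != r by apply/eqP => vr; move: Dv; rewrite vr D_r.
  case: (par_spec vr) => ep Dp; split => //; exact: (par_uniq ep evu Dp Dv).
- right; have Du : (D v).+1 = D u by apply/eqP; rewrite eqn_leq gt h2.
  have ur : u != r by apply/eqP => ur; move: Du; rewrite ur D_r.
  case: (par_spec ur) => ep Dp; split => //; exact: (par_uniq ep euv Dp Du).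
Qed.

Definition anc k v := iter (D v - k) par v.

Lemma D_iter n v : n <= D v -> D (iter n par v) = D v - n.
Proof.
elim: n => [|n IH] h /=; first by rewrite subn0.
have IH' := IH (ltnW h).
have wr : iter n par v != r.
  apply/eqP => wr; move: IH'; rewrite wr D_r; lia.
case: (par_spec wr) => _ Dw; lia.
Qed.

Lemma D_anc k v : k <= D v -> D (anc k v) = k.
Proof. move=> h; rewrite /anc D_iter ?leq_subr //; lia. Qed.

Lemma anc_self v : anc (D v) v = v.
Proof. by rewrite /anc subnn. Qed.

Lemma anc0 v : anc 0 v = r.
Proof. by apply: D0; rewrite D_anc. Qed.

Lemma anc_S i v : i < D v -> par (anc i.+1 v) = anc i v /\ e (anc i.+1 v) (anc i v).
Proof.
move=> h.
have E : anc i v = par (anc i.+1 v).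
  rewrite /anc; have -> : D v - i = (D v - i.+1).+1 by lia. by [].
have ar : anc i.+1 v != r.
  by apply/eqP => h'; have := D_anc h; rewrite h' D_r.
split; first by rewrite E.
rewrite E; exact: (par_spec ar).1.
Qed.

Lemma anc_par i v : v != r -> i <= D (par v) -> anc i (par v) = anc i v.
Proof.
move=> vr h; case: (par_spec vr) => _ Dp; rewrite /anc.
have -> : D v - i = (D (par v) - i).+1 by lia.
by rewrite iterSr.
Qed.

Variables (H : finType) (eH : rel H).
Hypothesis eHS : symmetric eH.

Definition hcol := is_Hcoloring e eH.

Lemma hcolE c u v : hcol c -> e u v -> eH (c u) (c v).
Proof. by move=> /forallP/(_ u)/forallP/(_ v)/implyP. Qed.

Definition reconf := reconfigurable e eH.

Lemma reconf_trans a b c : reconf a b -> reconf b c -> reconf a c.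
Proof.
move=> [s1 [h1 p1 l1]] [s2 [h2 p2 l2]]; exists (s1 ++ s2); split.
- rewrite -cat_cons all_cat h1 /=; by case/andP: h2.
- by rewrite cat_path p1 l1 p2.
- by rewrite last_cat l1 l2.
Qed.

Definition box (c1 c2 : {ffun T -> H}) :=
  forall d : {ffun T -> H}, (forall v, d v = c1 v \/ d v = c2 v) -> hcol d.

Lemma box_sym c1 c2 : box c1 c2 -> box c2 c1.
Proof. move=> b d hd; apply: b => v; case: (hd v); by [right|left]. Qed.

Lemma box_reconf c1 c2 : box c1 c2 -> reconf c1 c2.
Proof.
move=> bx; move: {2}#|[set v | c1 v != c2 v]| (erefl #|[set v | c1 v != c2 v]|) => n.
elim: n c1 bx => [|n IH] c1 bx En.
  exists [::]; split => //=.
    rewrite andbT; apply: bx => v; by left.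
  apply/ffunP => v; have := cards0_eq En.
  by move/setP/(_ v); rewrite !inE => /negbFE/eqP.
have : 0 < #|[set v | c1 v != c2 v]| by rewrite En.
case/card_gt0P => v; rewrite inE => hv.
pose c' := [ffun w => if w == v then c2 v else c1 w].
have box' : box c' c2.
  move=> d hd; apply: bx => w; case: (hd w) => ->; last by right.
  rewrite ffunE; case: eqP => [->|_]; by [right|left].
have E1 : [set w | c' w != c2 w] = [set w | c1 w != c2 w] :\ v.
  apply/setP => w; rewrite !inE ffunE.
  case: (eqVneq w v) => [->|]; by rewrite ?eqxx.
have En' : #|[set w | c' w != c2 w]| = n.
  move: En; rewrite (cardsD1 v) inE hv E1 add1n; by case.
have [s [hs ps ls]] := IH c' box' En'.
exists (c' :: s); split => //=.
- apply/andP; split; [apply: bx => w; by left | exact: hs].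
- rewrite ps andbT /differ_one.
  have -> : [set w | c1 w != c' w] = [set v].
    apply/setP => w; rewrite !inE ffunE.
    case: (eqVneq w v) => [->|]; by rewrite ?eqxx.
  by rewrite cards1.
Qed.

Lemma hcol_of_par (d : {ffun T -> H}) : (forall v, v != r -> eH (d (par v)) (d v)) -> hcol d.
Proof.
move=> h; apply/forallP => u; apply/forallP => v; apply/implyP => euv.
case: (edge_par euv) => [[<- Dv]|[<- Du]].
- apply: h; apply/eqP => vr; move: Dv; by rewrite vr D_r.
- rewrite eHS; apply: h; apply/eqP => ur; move: Du; by rewrite ur D_r.
Qed.

Definition col (a : {ffun T -> H}) (g : nat -> nat) :=
  [ffun v => a (anc (g (D v)) v)].

Lemma adj a i j v : hcol a -> v != r -> i <= D (par v) -> j <= D v ->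
  (i.+1 == j) || (j.+1 == i) -> eH (a (anc i (par v))) (a (anc j v)).
Proof.
move=> ha vr hi hj; case: (par_spec vr) => _ Dp.
rewrite anc_par //; case/orP => /eqP E; subst.
- case: (anc_S hj) => _ ed; rewrite eHS; exact: hcolE ha ed.
- have hj' : j < D v by lia.
  case: (anc_S hj') => _ ed; exact: hcolE ha ed.
Qed.

Lemma box_levels a g1 g2 : hcol a -> (forall d, g1 d <= d) -> (forall d, g2 d <= d) ->
  (forall m x y, (x == g1 m) || (x == g2 m) -> (y == g1 m.+1) || (y == g2 m.+1) ->
      (x.+1 == y) || (y.+1 == x)) ->
  box (col a g1) (col a g2).
Proof.
move=> ha h1 h2 hg d hd; apply: hcol_of_par => v vr.
have pk : forall w, exists2 x, (x == g1 (D w)) || (x == g2 (D w)) & d w = a (anc x w).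
  move=> w; case: (hd w) => ->; rewrite ffunE.
  + by exists (g1 (D w)); rewrite ?eqxx.
  + by exists (g2 (D w)); rewrite ?eqxx ?orbT.
case: (pk (par v)) => x hx ->; case: (pk v) => y hy ->.
case: (par_spec vr) => _ Dp.
apply: adj => //.
- by case/orP: hx => /eqP ->.
- by case/orP: hy => /eqP ->.
- by apply: hg hx _; rewrite Dp.
Qed.

Definition gk k d := if d < k then d else if odd (d + k) then k.-1 else k.

Lemma gk_le k d : gk k d <= d.
Proof. rewrite /gk; case: ifP => h //; case: ifP => _; lia. Qed.

Lemma gk_step k : 0 < k -> forall m x y,
  (x == gk k.+1 m) || (x == gk k m) -> (y == gk k.+1 m.+1) || (y == gk k m.+1) ->
  (x.+1 == y) || (y.+1 == x).
Proof.
move=> k0 m x y; rewrite /gk !addSn !addnS /=.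
have := odd_double_half (m + k).
case: (odd (m + k)) => /= hh; repeat case: ifPn => ?; lia.
Qed.

Lemma col_id a K : (forall v, D v < K) -> col a (gk K) = a.
Proof. move=> h; apply/ffunP => v; by rewrite ffunE /gk h anc_self. Qed.

Lemma box_gk a k : hcol a -> 0 < k -> box (col a (gk k.+1)) (col a (gk k)).
Proof. move=> ha k0; apply: box_levels => //; [exact: gk_le|exact: gk_le|exact: gk_step]. Qed.

Lemma chain a n : hcol a ->
  reconf (col a (gk 1)) (col a (gk n.+1)) /\ reconf (col a (gk n.+1)) (col a (gk 1)).
Proof.
move=> ha; elim: n => [|n [IH1 IH2]].
  have b := box_gk ha (isT : 0 < 1).
  have h : hcol (col a (gk 1)) by apply: b => v; right.
  by split; exists [::]; split => //=; rewrite andbT; exact: h.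
have b := box_gk ha (isT : 0 < n.+1).
split.
- apply: reconf_trans IH1 _; exact: box_reconf (box_sym b).
- apply: reconf_trans _ IH2; exact: box_reconf b.
Qed.

Definition gam (x y : H) := [ffun v : T => if odd (D v) then y else x].

Lemma box_par (b : bool) x (c1 c2 : {ffun T -> H}) :
  (forall v, odd (D v) != b -> c1 v = x /\ c2 v = x) ->
  (forall v, odd (D v) = b -> eH x (c1 v) /\ eH x (c2 v)) -> box c1 c2.
Proof.
move=> hf hv d hd; apply: hcol_of_par => v vr.
case: (par_spec vr) => _ Dp.
have Ov : odd (D v) = ~~ odd (D (par v)) by rewrite -Dp.
case: (eqVneq (odd (D (par v))) b) => Eu.
- have [h1 h2] : c1 v = x /\ c2 v = x by apply: hf; rewrite Ov Eu; by case: (b).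
  have -> : d v = x by case: (hd v) => ->.
  have [h3 h4] := hv _ Eu.
  by rewrite eHS; case: (hd (par v)) => ->.
- have [h1 h2] := hf _ Eu.
  have -> : d (par v) = x by case: (hd (par v)) => ->.
  have Ev : odd (D v) = b by move: Eu; rewrite Ov; case: (odd _); case: (b).
  have [h3 h4] := hv _ Ev.
  by case: (hd v) => ->.
Qed.

Lemma box_S3 a y : hcol a -> eH (a r) y -> box (col a (gk 1)) (gam (a r) y).
Proof.
move=> ha hy; apply: (@box_par true (a r)) => v; rewrite !ffunE /gk addn1 /=.
- move=> Ev; have Ev' : odd (D v) = false by move: Ev; case: (odd _).
  rewrite Ev' /=; split => //.
  have -> : (if D v < 1 then D v else 0) = 0 by case: ifP => //; rewrite ltnS leqn0 => /eqP.
  by rewrite anc0.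
- move=> Ev; rewrite Ev /=.
  have Dv : 0 < D v by case: (D v) Ev.
  rewrite ltnNge Dv /=; split => //.
  case: (anc_S Dv) => _ ed; rewrite anc0 in ed; rewrite eHS; exact: hcolE ha ed.
Qed.

Lemma box_S4 x y y' : eH x y -> eH x y' -> box (gam x y) (gam x y').
Proof.
move=> h h'; apply: (@box_par true x) => v; rewrite !ffunE.
- by case: (odd _).
- by move=> ->.
Qed.

Lemma box_S5 x z y : eH x y -> eH z y -> box (gam x y) (gam z y).
Proof.
move=> h h'; apply: (@box_par false y) => v; rewrite !ffunE.
- by case: (odd _).
- by move=> ->; rewrite eHS h eHS h'.
Qed.

Lemma walk_gam n : forall p x y, size p <= n -> eH x y -> path eH x p -> ~~ odd (size p) ->
  exists2 y', eH (last x p) y' & reconf (gam x y) (gam (last x p) y').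
Proof.
elim: n => [|n IH] [|a [|b p]] x y //= hs hxy.
- by move=> _ _; exists y => //; apply: box_reconf; apply: box_S4.
- by move=> _ _; exists y => //; apply: box_reconf; apply: box_S4.
- move=> /andP [hxa /andP [hab hp]] ho.
  have hba : eH b a by rewrite eHS.
  case: (IH p b a (ltnW hs) hba hp ltac:(by move: ho; rewrite !negbK)) => y' hl hr; exists y' => //.
  apply: reconf_trans (box_reconf (box_S4 hxy hxa)) _.
  apply: reconf_trans (box_reconf (box_S5 hxa hba)) hr.
Qed.

Lemma walk_trans a b c : even_walk eH a b -> even_walk eH b c -> even_walk eH a c.
Proof.
move=> [p [pp lp op]] [q [pq lq oq]]; exists (p ++ q); split.
- by rewrite cat_path pp lp pq.
- by rewrite last_cat lp lq.
- by rewrite size_cat oddD (negbTE op) (negbTE oq).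
Qed.

Lemma step_walk u0 c c' : e r u0 -> hcol c -> hcol c' -> differ_one c c' ->
  even_walk eH (c r) (c' r).
Proof.
move=> eu hc hc' /cards1P [z Ez].
case: (eqVneq (c r) (c' r)) => [<-|neq]; first by exists [::].
have rz : r = z.
  have : r \in [set v | c v != c' v] by rewrite inE neq.
  by rewrite Ez inE => /eqP.
have cu : c u0 = c' u0.
  case: (eqVneq (c u0) (c' u0)) => // h; exfalso.
  have : u0 \in [set v | c v != c' v] by rewrite inE h.
  rewrite Ez inE -rz => /eqP E; by move: eu; rewrite E eI.
exists [:: c u0; c' r]; split => //=.
by rewrite (hcolE hc eu) cu eHS (hcolE hc' eu).
Qed.

Lemma mainlem a b : 2 <= #|T| -> hcol a -> hcol b ->
  reconf a b <-> even_walk eH (a r) (b r).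
Proof.
move=> hT ha hb.
have [t tr] : exists t, t != r.
  case: (pickP (fun t => t != r)) => [t ht|none]; first by exists t.
  exfalso; have : #|T| <= 1.
    apply/fintype_le1P => x y; move: (none y) => /negbFE/eqP ->.
    by move: (none x) => /negbFE/eqP ->.
  by rewrite leqNgt hT.
have Dt := Dpos tr.
have eu0 : e r (anc 1 t).
  case: (anc_S Dt) => _ ed; by rewrite anc0 eS in ed.
split.
- case=> s [hs ps ls].
  elim: s a ha hs ps ls => [|c s IH] a' ha' /= hs ps ls.
    by subst; exists [::].
  case/andP: hs => _ /andP [hc hs']; case/andP: ps => d ps'.
  apply: walk_trans (step_walk eu0 ha' hc d) (IH c hc _ ps' ls).
  by rewrite /= hc hs'.
- move=> [p [pp lp op]].
  pose K := \max_(v : T) D v.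
  have DK : forall v, D v < K.+1 by move=> v; rewrite ltnS; exact: leq_bigmax.
  have ra : reconf a (gam (a r) (a (anc 1 t))).
    apply: reconf_trans (box_reconf (box_S3 ha (hcolE ha eu0))).
    rewrite -{1}(col_id a DK); exact: (chain K ha).2.
  have rb : reconf (gam (b r) (b (anc 1 t))) b.
    apply: reconf_trans (box_reconf (box_sym (box_S3 hb (hcolE hb eu0)))) _.
    rewrite -{2}(col_id b DK); exact: (chain K hb).1.
  case: (walk_gam (leqnn (size p)) (hcolE ha eu0) pp op) => y' hl hr.
  rewrite lp in hl hr.
  apply: reconf_trans ra _; apply: reconf_trans hr _.
  apply: reconf_trans (box_reconf (box_S4 hl (hcolE hb eu0))) rb.
Qed.

End Main.

Theorem proposition5 (H T : finType) (eH : rel H) (eT : rel T) (r : T)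
    (alpha beta : {ffun T -> H}) :
  undirected eH -> is_tree eT -> 2 <= #|T| ->
  is_Hcoloring eT eH alpha -> is_Hcoloring eT eH beta ->
  reconfigurable eT eH alpha beta <-> even_walk eH (alpha r) (beta r).
Proof.
move=> hu [[eS eI] [eC eA]] hT ha hb.
exact: (@mainlem T eT r eS eI eC eA H eH hu alpha beta hT ha hb).
Qed.
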